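(* Let $Q=\{0,1,\dots,n-1\}$ and alphabet $\{a,b\}$, and define three DFAs on $Q$, all with $b$ acting by $i\mapsto i+1$ for $0\le i\le n-2$ and $n-1\mapsto 0$: (1) the Černý automaton $\mathscr{C}_n$ ($n\ge 2$): $a$ fixes $i$ for $0\le i\le n-2$ and sends $n-1\mapsto 0$; (2) $\mathscr{L}_n$ ($n\ge 3$): $a$ sends $i\mapsto i+1$ for $0\le i\le n-4$, $n-3\mapsto n-1$, $n-2\mapsto 0$, $n-1\mapsto 0$; (3) $\mathscr{V}_n$ ($n\ge 2$): $a$ sends $i\mapsto i+1$ for $0\le i\le n-3$, $n-2\mapsto 0$, $n-1\mapsto 0$. Then $rc(Syn(\mathscr{C}_n))=rc(Syn(\mathscr{L}_n))=rc(Syn(\mathscr{V}_n))=n$.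
   Context: A DFA $\langle Q,\Sigma,\delta\rangle$ has a total transition function $\delta:Q\times\Sigma\to Q$ extended to words; it is synchronizing if some word $w$ satisfies $\delta(q,w)=\delta(q',w)$ for all $q,q'\in Q$, and $Syn(\mathscr{A})$ denotes the set of all such words. A language $L$ is ideal if $L=\Sigma^*L\Sigma^*$ (each $Syn(\mathscr{A})$ is ideal). The reset complexity $rc(L)$ of an ideal language $L$ is the minimal number of states of a synchronizing DFA $\mathscr{B}$ with $Syn(\mathscr{B})=L$. *)

(* Defs.v *)
From mathcomp Require Import all_boot.
Set Implicit Arguments. Unset Strict Implicit. Unset Printing Implicit Defensive.

Inductive letter := La | Lb.

(* A DFA over {a,b} with state set Q (a finite type) is a total transition
   function d : Q -> letter -> Q; extended to words (left to right). *)
Definition run (Q : Type) (d : Q -> letter -> Q) (q : Q) (w : seq letter) : Q :=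
  foldl d q w.

Definition syn (Q : finType) (d : Q -> letter -> Q) (w : seq letter) : bool :=
  [forall q : Q, forall q' : Q, run d q w == run d q' w].

Definition synchronizing (Q : finType) (d : Q -> letter -> Q) : Prop :=
  exists w, syn d w.

Definition is_rc (L : seq letter -> bool) (n : nat) : Prop :=
  (exists (Q : finType) (d : Q -> letter -> Q),
      #|Q| = n /\ synchronizing d /\ forall w, syn d w = L w)
  /\ (forall (Q : finType) (d : Q -> letter -> Q),
      synchronizing d -> (forall w, syn d w = L w) -> n <= #|Q|).

(* k mod n as an element of 'I_n (n > 0 is witnessed by i : 'I_n). *)
Definition modI (n : nat) (i : 'I_n) (k : nat) : 'I_n :=
  Ordinal (ltn_pmod k (leq_ltn_trans (leq0n i) (ltn_ord i))).

Definition bmap (n : nat) (i : 'I_n) : 'I_n := modI i i.+1.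

Definition cerny (n : nat) (i : 'I_n) (x : letter) : 'I_n :=
  match x with
  | La => if i.+1 < n then i else modI i 0
  | Lb => bmap i
  end.

Definition autL (n : nat) (i : 'I_n) (x : letter) : 'I_n :=
  match x with
  | La => if i.+3 < n then modI i i.+1
          else if i.+3 == n then modI i n.-1
          else modI i 0
  | Lb => bmap i
  end.

Definition autV (n : nat) (i : 'I_n) (x : letter) : 'I_n :=
  match x with
  | La => if i.+2 < n then modI i i.+1 else modI i 0
  | Lb => bmap i
  end.

(* Main.v *)
Require Import Defs.
From mathcomp Require Import all_boot.
From mathcomp Require Import zify.
Set Implicit Arguments. Unset Strict Implicit. Unset Printing Implicit Defensive.

Definition vpow (v : seq letter) (t : nat) : seq letter := flatten (nseq t v).

Lemma run_vpow (Q : Type) (d : Q -> letter -> Q) v t q :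
  run d q (vpow v t) = iter t (fun p => run d p v) q.
Proof.
elim: t q => [|t IH] q; first by [].
rewrite iterSr -IH /run /vpow /= foldl_cat //.
Qed.

Lemma iter_card (Q : finType) (f : Q -> Q) k :
  (forall q q', iter k.+1 f q = iter k.+1 f q') ->
  (exists q q', iter k f q != iter k f q') -> k.+2 <= #|Q|.
Proof.
move=> Hs [q0 [q1 Hne]].
pose J t := [set iter t f q | q in Q].
pose c t := #|J t|.
have sub t : J t.+1 \subset J t.
  apply/subsetP=> x /imsetP [q _ ->]; rewrite iterSr; exact: imset_f.
have Jf t : J t.+1 = f @: J t.
  apply/setP=> x; apply/imsetP/imsetP => [[q _ ->]|[y /imsetP [q _ ->] ->]].
    by exists (iter t f q); [exact: imset_f| rewrite iterS].
  by exists q => //; rewrite iterS.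
have eqJ t : c t = c t.+1 -> J t = J t.+1.
  move=> E; apply/esym/eqP; rewrite eqEcard sub /=; rewrite /c in E; by rewrite E.
have stab t : c t = c t.+1 -> forall s, c (t + s) = c (t + s).+1.
  move=> E s; elim: s => [|s IH]; first by rewrite addn0.
  have := eqJ _ IH => EJ.
  by rewrite /c addnS Jf EJ -Jf.
have ck : 2 <= c k.
  rewrite /c; apply: (@leq_trans #|[set iter k f q0; iter k f q1]|).
    by rewrite cards2 Hne.
  apply/subset_leq_card/subsetP=> x; rewrite !inE => /orP [] /eqP ->; exact: imset_f.
have ck1 : c k.+1 <= 1.
  rewrite /c; apply: (@leq_trans #|[set iter k.+1 f q0]|); last by rewrite cards1.
  apply/subset_leq_card/subsetP=> x /imsetP [q _ ->]; by rewrite inE (Hs q q0).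
have lt t : t <= k -> c t.+1 < c t.
  move=> Htk; rewrite ltn_neqAle subset_leq_card ?sub // andbT.
  apply/negP=> /eqP E.
  have := stab t (esym E) (k - t); rewrite subnKC // => E2.
  by move: ck ck1; rewrite E2; lia.
have acc t : t <= k.+1 -> c t + t <= c 0.
  elim: t => [|t IH] Ht; first by rewrite addn0.
  have := IH (ltnW Ht); have := lt t Ht; lia.
have c1 : 1 <= c k.+1.
  by rewrite /c card_gt0; apply/set0Pn; exists (iter k.+1 f q0); exact: imset_f.
have := acc k.+1 (leqnn _); have : c 0 <= #|Q| by exact: max_card.
lia.
Qed.

Lemma lower (Q : finType) (d : Q -> letter -> Q) (v : seq letter) k :
  syn d (vpow v k.+1) -> ~~ syn d (vpow v k) -> k.+2 <= #|Q|.
Proof.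
move=> Hs Hn; apply: (iter_card (f := fun p => run d p v)).
  move=> q q'; rewrite -!run_vpow.
  by move/forallP: Hs => /(_ q) /forallP /(_ q') /eqP.
move: Hn; rewrite /syn negb_forall => /existsP [q]; rewrite negb_forall => /existsP [q'].
by rewrite !run_vpow => H; exists q, q'.
Qed.


Lemma run_val n (d : 'I_n -> letter -> 'I_n) (F : nat -> letter -> nat) :
  (forall i x, val (d i x) = F (val i) x) ->
  forall w i, val (run d i w) = run F (val i) w.
Proof. move=> H; elim=> [|x w IH] i //=; by rewrite /run /= -/(run _ _ _) IH H. Qed.

Lemma rc_of n (d : 'I_n -> letter -> 'I_n) (v : seq letter) (F : nat -> letter -> nat) :
  (forall i x, val (d i x) = F (val i) x) -> 2 <= n ->
  (forall i, i < n -> run F i (vpow v n.-1) = run F 0 (vpow v n.-1)) ->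
  run F 0 (vpow v (n-2)) != run F n.-1 (vpow v (n-2)) -> is_rc (syn d) n.
Proof.
move=> Hd Hn Hs Hne.
have Sy : syn d (vpow v n.-1).
  apply/forallP=> q; apply/forallP=> q'; apply/eqP/val_inj.
  by rewrite /= !(run_val Hd) (Hs (val q)) ?ltn_ord // (Hs (val q')) ?ltn_ord.
split.
  exists 'I_n, d; split; first exact: card_ord.
  by split=> //; exists (vpow v n.-1).
move=> Q d' _ H.
have -> : n = (n - 2).+2 by lia.
apply: (lower (d := d') (v := v)).
  by rewrite H; have -> : (n - 2).+1 = n.-1 by lia.
rewrite H; apply/negP=> /forallP /(_ (Ordinal (ltn_trans (ltnSn 0) Hn))) /forallP.
have h1 : n.-1 < n by lia.
move=> /(_ (Ordinal h1)) /eqP /(congr1 val).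
by rewrite !(run_val Hd) /=; apply/eqP.
Qed.

Lemma bsteps n (F : nat -> letter -> nat) : 0 < n ->
  (forall i, F i Lb = i.+1 %% n) ->
  forall k i, i < n -> run F i (nseq k Lb) = (i + k) %% n.
Proof.
move=> Hn Hb; elim=> [|k IH] i Hi; first by rewrite addn0 modn_small.
rewrite /run /= -/(run _ _ _) Hb IH ?ltn_pmod // modnDml addSnnS //.
Qed.

Lemma iter_pred (g : nat -> nat) n : (forall i, i < n -> g i = i.-1) ->
  forall t i, i < n -> iter t g i = i - t.
Proof.
move=> Hg; elim=> [|t IH] i Hi /=; first by rewrite subn0.
by rewrite IH // Hg; [rewrite subnS | lia].
Qed.

Lemma iter_succ (g : nat -> nat) n : (forall i, i < n -> g i = minn i.+1 n.-1) ->
  forall t i, i < n -> iter t g i = minn (i + t) n.-1.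
Proof.
move=> Hg; elim=> [|t IH] i Hi /=; first by rewrite addn0; lia.
by rewrite IH // Hg; lia.
Qed.

Lemma rc_pred n (d : 'I_n -> letter -> 'I_n) (v : seq letter) (F : nat -> letter -> nat) :
  (forall i x, val (d i x) = F (val i) x) -> 2 <= n ->
  (forall i, i < n -> run F i v = i.-1) -> is_rc (syn d) n.
Proof.
move=> Hd Hn Hv.
have E t i : i < n -> run F i (vpow v t) = i - t.
  by move=> Hi; rewrite run_vpow; apply: (iter_pred Hv).
apply: (rc_of (v := v) Hd) => //.
  by move=> i Hi; rewrite !E //; lia.
by rewrite !E //; lia.
Qed.

Lemma rc_succ n (d : 'I_n -> letter -> 'I_n) (v : seq letter) (F : nat -> letter -> nat) :
  (forall i x, val (d i x) = F (val i) x) -> 2 <= n ->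
  (forall i, i < n -> run F i v = minn i.+1 n.-1) -> is_rc (syn d) n.
Proof.
move=> Hd Hn Hv.
have E t i : i < n -> run F i (vpow v t) = minn (i + t) n.-1.
  by move=> Hi; rewrite run_vpow; apply: (iter_succ Hv).
apply: (rc_of (v := v) Hd) => //.
  by move=> i Hi; rewrite !E //; lia.
by rewrite !E //; lia.
Qed.


Definition FC n i x := match x with La => if i.+1 < n then i else 0 %% n | Lb => i.+1 %% n end.
Definition FV n i x := match x with La => if i.+2 < n then i.+1 %% n else 0 %% n | Lb => i.+1 %% n end.
Definition FL n i x := match x with
  | La => if i.+3 < n then i.+1 %% n else if i.+3 == n then n.-1 %% n else 0 %% n
  | Lb => i.+1 %% n end.

Lemma valC n (i : 'I_n) x : val (cerny i x) = FC n (val i) x.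
Proof. by case: x => //=; case: ifP. Qed.
Lemma valV n (i : 'I_n) x : val (autV i x) = FV n (val i) x.
Proof. by case: x => //=; case: ifP. Qed.
Lemma valL n (i : 'I_n) x : val (autL i x) = FL n (val i) x.
Proof. by case: x => //=; case: ifP => //; case: ifP. Qed.

Lemma cerny_rc n : 2 <= n -> is_rc (syn (@cerny n)) n.
Proof.
move=> Hn; apply: (rc_pred (v := rcons (nseq n.-1 Lb) La) (@valC n)) => // i Hi.
have Hb := @bsteps n (FC n) ltac:(lia) (fun _ => erefl) n.-1 i Hi; rewrite /run in Hb.
rewrite /run -cats1 foldl_cat Hb /=.
case: i Hi {Hb} => [|i] Hi.
  by rewrite add0n modn_small ?mod0n; [rewrite ifF //; lia | lia].
have -> : i.+1 + n.-1 = i + n by lia.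
by rewrite modnDr modn_small ?ifT //; lia.
Qed.

Lemma autV_rc n : 2 <= n -> is_rc (syn (@autV n)) n.
Proof.
move=> Hn; apply: (rc_pred (v := rcons (nseq (n-2) Lb) La) (@valV n)) => // i Hi.
have Hb := @bsteps n (FV n) ltac:(lia) (fun _ => erefl) (n-2) i Hi; rewrite /run in Hb.
rewrite /run -cats1 foldl_cat Hb /=.
case: i Hi {Hb} => [|[|i]] Hi.
- by rewrite add0n modn_small ?mod0n; [rewrite ifF //; lia | lia].
- by rewrite modn_small ?mod0n; [rewrite ifF //; lia | lia].
have -> : i.+2 + (n - 2) = i + n by lia.
by rewrite modnDr modn_small ?ifT ?modn_small //; lia.
Qed.


Lemma aiter n k j : j + k + 3 <= n -> foldl (FL n) j (nseq k La) = j + k.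
Proof.
elim: k j => [|k IH] j H /=; first by rewrite addn0.
rewrite ifT; last by lia.
rewrite modn_small; last by lia.
rewrite IH; lia.
Qed.

Lemma nseq_split (k1 k2 k : nat) (x : letter) : k = k1 + k2 -> nseq k x = nseq k1 x ++ nseq k2 x.
Proof. by move=> ->; rewrite nseqD. Qed.

Lemma FL1 n j : j.+3 < n -> FL n j La = j.+1.
Proof. by move=> H; rewrite /= H modn_small //; lia. Qed.
Lemma FL2 n j : j.+3 = n -> FL n j La = n.-1.
Proof. by move=> H; rewrite /= H ltnn eqxx modn_small //; lia. Qed.
Lemma FL3 n j : n < j.+3 -> FL n j La = 0.
Proof. move=> H; rewrite /= ifF; last by lia. by rewrite ifF ?mod0n //; lia. Qed.

Lemma foldl_cons (F : nat -> letter -> nat) j x s : foldl F j (x :: s) = foldl F (F j x) s.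
Proof. by []. Qed.

Lemma hL n i : 3 <= n -> i < n ->
  foldl (FL n) i (nseq (n-2) La) =
  if i == 0 then n.-1 else if i <= n - 3 then i.-1 else n - 3.
Proof.
move=> Hn Hi.
case: i Hi => [|i] Hi.
  rewrite (@nseq_split (n-3) 1); last by lia.
  rewrite foldl_cat (@aiter n (n-3)); last by lia.
  by rewrite foldl_cons FL2 //; lia.
case: (leqP i.+1 (n-3)) => Hi3.
  rewrite (@nseq_split (n-3-i.+1) i.+2); last by lia.
  rewrite foldl_cat (@aiter n (n-3-i.+1)); last by lia.
  change (nseq i.+2 La) with (La :: La :: nseq i La).
  rewrite foldl_cons FL2; last by lia.
  rewrite foldl_cons FL3; last by lia.
  rewrite aiter; last by lia.
  by rewrite add0n.
rewrite (@nseq_split 1 (n-3)); last by lia.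
rewrite foldl_cat.
change (nseq 1 La) with [:: La].
rewrite foldl_cons FL3 /=; last by lia.
by rewrite aiter; lia.
Qed.

Lemma autL_rc n : 3 <= n -> is_rc (syn (@autL n)) n.
Proof.
move=> Hn; apply: (rc_succ (v := nseq (n-2) La ++ [:: Lb; Lb]) (@valL n)) => [|i Hi]; first by lia.
rewrite /run foldl_cat hL //=.
case: i Hi => [|i] Hi /=.
  have -> : n.-1.+1 = n by lia.
  by rewrite modnn modn_small //; lia.
case: ifP => H3.
  by rewrite (@modn_small i.+1) ?(@modn_small i.+2); lia.
by rewrite (@modn_small (n-3).+1) ?(@modn_small (n-3).+2); lia.
Qed.


Theorem theorem1 (n : nat) :
  (2 <= n -> is_rc (syn (@cerny n)) n) /\
  (3 <= n -> is_rc (syn (@autL n)) n) /\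
  (2 <= n -> is_rc (syn (@autV n)) n).
Proof.
split; first exact: cerny_rc.
split; first exact: autL_rc.
exact: autV_rc.
Qed.
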